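(* Let $\Gamma$ be a class of continuous, nondecreasing, nonnegative functions $\mathbb{R}\to\mathbb{R}$ such that for every compact $K\subset\mathbb{R}$, every continuous nondecreasing nonnegative $h:K\to\mathbb{R}$ and every $\eta>0$ there is $\gamma\in\Gamma$ with $\sup_K|h-\gamma|<\eta$. Let $\mathcal{G}$ be a class of convex real functions that are continuously differentiable on an open set containing $[0,1]^d$, such that for every $R(\boldsymbol{x})=\sum_{i=1}^N\psi_i(\boldsymbol{a}_i^\top\boldsymbol{x}+b_i)$ with each $\psi_i\in C^1(\mathbb{R})$ convex, and every $\eta>0$, there is $G\in\mathcal{G}$ with $\sup_{[0,1]^d}\|\nabla R-\nabla G\|<\eta$. Let $F(\boldsymbol{x})=T\big(\sum_{i=1}^N\psi_i(\boldsymbol{a}_i^\top\boldsymbol{x}+b_i)\big)$ on $[0,1]^d$, where $T\in C^1(\mathbb{R})$ is convex and nondecreasing and each $\psi_i\in C^1(\mathbb{R})$ is convex. Then for every $\epsilon>0$ there exist $\gamma\in\Gamma$, $G\in\mathcal{G}$ and $\beta\in\mathbb{R}$ such that $h(\boldsymbol{x})=\gamma(G(\boldsymbol{x})+\beta)\nabla G(\boldsymbol{x})$ satisfies $\sup_{\boldsymbol{x}\in[0,1]^d}\|\nabla F(\boldsymbol{x})-h(\boldsymbol{x})\|<\epsilon$. Moreover every such $h$ (with $\gamma\in\Gamma$, $G\in\mathcal{G}$, $\beta\in\mathbb{R}$) is the gradient of a convex $C^1$ function on $[0,1]^d$.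
   Context: $C^1(\mathbb{R})$: continuously differentiable real functions on $\mathbb{R}$. $\|\cdot\|$ is the Euclidean norm. *)

(* Defs.v *)
(* R : realType, points of R^d are row vectors 'rV[R]_d. *)
From HB Require Import structures.
From mathcomp Require Import all_boot all_order all_algebra.
From mathcomp Require Import all_classical all_reals all_analysis.
Set Implicit Arguments. Unset Strict Implicit. Unset Printing Implicit Defensive.
Import Order.TTheory GRing.Theory Num.Theory.
Import numFieldNormedType.Exports.
Local Open Scope classical_set_scope.
Local Open Scope ring_scope.

Section Defs.
Variable R : realType.

Definition cube (d : nat) : set 'rV[R]_d :=
  [set x | forall i : 'I_d, 0 <= x ord0 i <= 1].
Arguments cube : clear implicits.

Definition dotv (d : nat) (a x : 'rV[R]_d) : R := \sum_(i < d) a ord0 i * x ord0 i.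
Definition enorm (d : nat) (v : 'rV[R]_d) : R := Num.sqrt (\sum_(i < d) v ord0 i ^+ 2).

Definition grad (d : nat) (f : 'rV[R]_d -> R) (x : 'rV[R]_d) : 'rV[R]_d :=
  \row_(i < d) 'D_(delta_mx ord0 i) f x.

Definition C1_on (d : nat) (U : set 'rV[R]_d) (f : 'rV[R]_d -> R) : Prop :=
  open U /\ (forall x, U x -> differentiable f x) /\
  (forall x, U x -> {for x, continuous (grad f)}).

Definition C1_near_cube (d : nat) (f : 'rV[R]_d -> R) : Prop :=
  exists U : set 'rV[R]_d, cube d `<=` U /\ C1_on U f.

Definition convex_on (d : nat) (S : set 'rV[R]_d) (f : 'rV[R]_d -> R) : Prop :=
  forall x y, S x -> S y -> forall t : R, 0 <= t <= 1 ->
    f (t *: x + (1 - t) *: y) <= t * f x + (1 - t) * f y.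

Definition convex_fun1 (f : R -> R) : Prop :=
  forall x y t : R, 0 <= t <= 1 -> f (t * x + (1 - t) * y) <= t * f x + (1 - t) * f y.

Definition C1_real (f : R -> R) : Prop :=
  (forall x, derivable f x 1) /\ continuous (derive1 f).

Definition nondecr (f : R -> R) : Prop := forall x y, x <= y -> f x <= f y.

Definition Gamma_fun (g : R -> R) : Prop :=
  continuous g /\ nondecr g /\ (forall x, 0 <= g x).

Definition ridge_sum (d N : nat) (psi : 'I_N -> R -> R) (a : 'I_N -> 'rV[R]_d)
  (b : 'I_N -> R) (x : 'rV[R]_d) : R :=
  \sum_(i < N) psi i (dotv (a i) x + b i).

(* sup_{x in S} |u x| < eta, stated as: bounded by some c < eta *)
Definition sup_lt (T : Type) (S : set T) (u : T -> R) (eta : R) : Prop :=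
  exists c, c < eta /\ forall x, S x -> u x <= c.

End Defs.
Arguments cube {R} d.

(* Main.v *)
Require Import Defs.
From HB Require Import structures.
From mathcomp Require Import all_boot all_order all_algebra.
From mathcomp Require Import all_classical all_reals all_analysis.
Import Order.TTheory GRing.Theory Num.Theory.
Import numFieldNormedType.Exports.
Local Open Scope classical_set_scope.
Local Open Scope ring_scope.
From mathcomp Require Import ring lra.


Section Real.
Context {R : realType}.

Lemma derive1_ge_right (f : R -> R) x c e : 0 < e -> derivable f x 1 ->
  (forall h, 0 < h < e -> c <= (f (h + x) - f x) / h) -> c <= derive1 f x.
Proof.
move=> e0 df H.
have cv : cvg ((fun h => h^-1 *: (f (h + x) - f x)) @ 0^').
  move: df; rewrite /derivable.
  set q := (fun h => _); set q' := (fun h => _).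
  by have -> : q = q' by apply/funext => h; rewrite /q /q' /= [h%:A]mulr1.
rewrite /derive1 (cvg_at_rightE _ _ cv).
apply: (@limr_ge R (at_right (0:R)) _ R c (fun h => h^-1 *: (f (h + x) - f x))).
  apply/cvg_ex; exists (lim ((fun h => h^-1 *: (f (h + x) - f x)) @ 0^')).
  move=> A /cv; rewrite /= !near_simpl /prop_near1 /= /within /=.
  move=> [r /= r0 Hr]; exists r => // y ry yp; apply: Hr => //; exact: lt0r_neq0.
near=> h; rewrite /= [_ *: _]mulrC; apply: H; apply/andP; split.
  by near: h; exact: nbhs_right_gt.
by near: h; apply: nbhs_right_lt.
Unshelve. all: by end_near.
Qed.


Lemma derive1_le_right (f : R -> R) x c e : 0 < e -> derivable f x 1 ->
  (forall h, 0 < h < e -> (f (h + x) - f x) / h <= c) -> derive1 f x <= c.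
Proof.
move=> e0 df H.
have cv : cvg ((fun h => h^-1 *: (f (h + x) - f x)) @ 0^').
  move: df; rewrite /derivable.
  set q := (fun h => _); set q' := (fun h => _).
  by have -> : q = q' by apply/funext => h; rewrite /q /q' /= [h%:A]mulr1.
rewrite /derive1 (cvg_at_rightE _ _ cv).
apply: (@limr_le R (at_right (0:R)) _ R c (fun h => h^-1 *: (f (h + x) - f x))).
  apply/cvg_ex; exists (lim ((fun h => h^-1 *: (f (h + x) - f x)) @ 0^')).
  move=> A /cv; rewrite /= !near_simpl /prop_near1 /= /within /=.
  move=> [r /= r0 Hr]; exists r => // y ry yp; apply: Hr => //; exact: lt0r_neq0.
near=> h; rewrite /= [_ *: _]mulrC; apply: H; apply/andP; split.
  by near: h; exact: nbhs_right_gt.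
by near: h; apply: nbhs_right_lt.
Unshelve. all: by end_near.
Qed.


Lemma slope1 (T : R -> R) x z y : convex_fun1 T -> x < z -> z < y ->
  (T z - T x) / (z - x) <= (T y - T x) / (y - x).
Proof.
move=> cT xz zy.
have zx0 : 0 < z - x by rewrite subr_gt0.
have yx0 : 0 < y - x by rewrite subr_gt0; exact: lt_trans zy.
set t := (z - x) / (y - x).
have t01 : 0 <= t <= 1.
  apply/andP; split; first by rewrite divr_ge0 // ltW.
  by rewrite ler_pdivrMr // mul1r lerD2r ltW.
have := cT y x t t01.
have -> : t * y + (1 - t) * x = z by rewrite /t; field; rewrite gt_eqF.
move=> Hc.
rewrite ler_pdivrMr // mulrAC ler_pdivlMr //.
have ht : t * (y - x) = z - x by rewrite /t; field; rewrite gt_eqF.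
have H : (T z - T x) <= t * (T y - T x) by lra.
have := ler_wpM2r (ltW yx0) H.
nra.
Qed.

Lemma slope2 (T : R -> R) x y w : convex_fun1 T -> x < y -> y < w ->
  (T y - T x) / (y - x) <= (T w - T y) / (w - y).
Proof.
move=> cT xy yw.
have yx0 : 0 < y - x by rewrite subr_gt0.
have wy0 : 0 < w - y by rewrite subr_gt0.
have wx0 : 0 < w - x by rewrite subr_gt0; exact: lt_trans yw.
set t := (y - x) / (w - x).
have t01 : 0 <= t <= 1.
  apply/andP; split; first by rewrite divr_ge0 // ltW.
  by rewrite ler_pdivrMr // mul1r lerD2r ltW.
have := cT w x t t01.
have -> : t * w + (1 - t) * x = y by rewrite /t; field; rewrite gt_eqF.
have -> : 1 - t = (w - y) / (w - x) by rewrite /t; field; rewrite gt_eqF.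
move=> Hc.
rewrite ler_pdivrMr // mulrAC ler_pdivlMr //.
have := ler_wpM2r (ltW wx0) Hc.
have e (u A : R) : u / (w - x) * A * (w - x) = u * A by field; rewrite gt_eqF.
rewrite mulrDl /t !e; nra.
Qed.


Lemma convex_deriv_mono (T : R -> R) x y : convex_fun1 T ->
  (forall z, derivable T z 1) -> x <= y -> derive1 T x <= derive1 T y.
Proof.
move=> cT dT; rewrite le_eqVlt => /predU1P[->//|xy].
have yx0 : 0 < y - x by rewrite subr_gt0.
apply: (@le_trans _ _ ((T y - T x) / (y - x))).
  apply: (@derive1_le_right _ _ _ (y - x)) => // h /andP[h0 hyx].
  rewrite -[h in _ / h](addrK x).
  apply: slope1 => //; first by rewrite ltrDr.
  by rewrite -ltrBrDr.
apply: (@derive1_ge_right _ _ _ 1) => // h /andP[h0 _].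
rewrite -[h in _ <= _ / h](addrK y).
by apply: (@slope2 T x y (h + y) cT xy); lra.
Qed.

Lemma nondecr_deriv_ge0 (T : R -> R) x : nondecr T -> derivable T x 1 ->
  0 <= derive1 T x.
Proof.
move=> nT dT; apply: (@derive1_ge_right _ _ _ 1) => // h /andP[h0 _].
by rewrite divr_ge0 ?subr_ge0 ?(ltW h0) // nT // lerDr ltW.
Qed.

Lemma unif_cont (f : R -> R) (K : set R) e : compact K -> continuous f -> 0 < e ->
  exists2 del, 0 < del & forall x y, K x -> `|x - y| < del -> `|f x - f y| < e.
Proof.
move=> cK cf e0.
have H : forall x, K x -> \forall x' \near x & i \near 0^'+,
    forall y, `|x' - y| < i -> `|f x' - f y| < e.
  move=> x Kx.
  have : \forall t \near x, `|f x - f t| < e / 2.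
    by apply: (@cvgr_dist_lt _ _ _ (nbhs x)); [exact: cf | rewrite divr_gt0].
  move=> /nbhs_ballP [r /= r0 Hr].
  have r20 : 0 < r / 2 by rewrite divr_gt0.
  exists (ball x (r / 2), (fun i : R => (0 < i < r / 2 : Prop))) => /=.
    split; first exact: nbhsx_ballx.
    by exists (r / 2) => //= i; rewrite /ball /= sub0r normrN => ri i0; rewrite i0 -(gtr0_norm i0).
  case=> x' i /= [xx' /andP[i0 ir]] y x'y.
  rewrite /ball /= in xx'.
  have h1 : `|f x - f x'| < e / 2.
    by apply: Hr; rewrite /ball /=; apply: lt_trans xx' _; rewrite ltr_pdivrMr // ltr_pMr // ltr1n.
  have h2 : `|f x - f y| < e / 2.
    apply: Hr; rewrite /ball /=.
    have : `|x - y| <= `|x - x'| + `|x' - y| by rewrite -(subrKA x') ler_normD.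
    move=> h; apply: le_lt_trans h _. 
    by rewrite (splitr r); apply: ltrD => //; apply: lt_trans ir.
  have : `|f x' - f y| <= `|f x - f x'| + `|f x - f y|.
    by rewrite -(subrKA (f x)) (le_trans (ler_normD _ _)) // distrC.
  move=> h; apply: le_lt_trans h _; by rewrite (splitr e) ltrD.
have := (compact_near_coveringP K).1 cK R (0^'+)
  (fun del x => forall y, `|x - y| < del -> `|f x - f y| < e) _ H.
move=> [r /= r0 Hr].
exists (r / 2); first by rewrite divr_gt0.
move=> x y Kx; apply: (Hr (r / 2)) => //; last by rewrite divr_gt0.
by rewrite /ball /= sub0r normrN gtr0_norm ?divr_gt0 // ltr_pdivrMr // ltr_pMr // ltr1n.
Qed.

Lemma mvt_from {k : R -> R} {a0 u w : R} : (forall y, a0 < y -> derivable k y 1) ->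
  a0 < u -> u <= w -> exists2 c, u <= c <= w & k w - k u = derive1 k c * (w - u).
Proof.
move=> dk au uw.
have [||c cin E] := @MVT_segment R k (derive1 k) u w uw.
- move=> x; rewrite in_itv /= => /andP[ux _].
  rewrite derive1E; apply: derivableP; apply: dk; exact: lt_trans ux.
- apply: continuous_in_subspaceT => x; rewrite inE /= in_itv /= => /andP[ux _].
  apply: differentiable_continuous; apply/derivable1_diffP; apply: dk.
  exact: lt_le_trans ux.
- by exists c => //; rewrite in_itv /= in cin.
Qed.

Lemma deriv_convex (k : R -> R) a0 : (forall y, a0 < y -> derivable k y 1) ->
  (forall y z, a0 < y -> y <= z -> derive1 k y <= derive1 k z) ->
  (forall y, a0 < y -> 0 <= derive1 k y) ->
  (forall u w, a0 < u -> u <= w -> k u <= k w) /\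
  (forall u w t, a0 < u -> a0 < w -> 0 <= t <= 1 ->
     k (t * u + (1 - t) * w) <= t * k u + (1 - t) * k w).
Proof.
move=> dk mk pk; split.
  move=> u w au uw; have [c /andP[uc cw] E] := mvt_from dk au uw.
  rewrite -subr_ge0 E mulr_ge0 // ?subr_ge0 //; apply: pk; exact: lt_le_trans uc.
have key : forall u w t, a0 < u -> u <= w -> 0 <= t <= 1 ->
     k (t * u + (1 - t) * w) <= t * k u + (1 - t) * k w.
  move=> u w t au uw /andP[t0 t1].
  set z := t * u + (1 - t) * w.
  have uz : u <= z by rewrite /z; nra.
  have zw : z <= w by rewrite /z; nra.
  have az : a0 < z by exact: lt_le_trans uz.
  have [c1 /andP[uc1 c1z] E1] := mvt_from dk au uz.
  have [c2 /andP[zc2 c2w] E2] := mvt_from dk az zw.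
  have ac1 : a0 < c1 by exact: lt_le_trans uc1.
  have m12 : derive1 k c1 <= derive1 k c2 by apply: mk => //; exact: le_trans zc2.
  have p1 : 0 <= derive1 k c1 by exact: pk.
  have ez1 : z - u = (1 - t) * (w - u) by rewrite /z; ring.
  have ez2 : w - z = t * (w - u) by rewrite /z; ring.
  rewrite ez1 in E1; rewrite ez2 in E2.
  have wu : 0 <= w - u by rewrite subr_ge0.
  have : 0 <= t * (1 - t) * (w - u) * (derive1 k c2 - derive1 k c1).
    by rewrite !mulr_ge0 // subr_ge0.
  nra.
move=> u w t au aw t01; case: (leP u w) => uw; first exact: key.
have t01' : 0 <= 1 - t <= 1 by case/andP: t01 => ? ?; apply/andP; split; lra.
have := key w u (1 - t) aw (ltW uw) t01'.
have -> : 1 - (1 - t) = t by ring.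
by rewrite addrC [X in _ <= X]addrC.
Qed.

Lemma antideriv (g : R -> R) (a0 : R) : continuous g ->
  exists Gm : R -> R, forall y, a0 < y -> derivable Gm y 1 /\ derive1 Gm y = g y.
Proof.
move=> cg.
exists (fun x => (\int[@lebesgue_measure R]_(t in [set` `[a0, x]]) (g t))%R).
move=> y ay.
apply: (@continuous_FTC1_closed R g a0 y (y + 1)) => //.
- by rewrite ltrDl.
- apply: continuous_compact_integrable; first exact: segment_compact.
  by apply: continuous_subspaceT => x; exact: cg.
- exact: cg.
Qed.
End Real.

Section S.
Context {R : realType} {d : nat}.
Local Notation V := 'rV[R]_d.

Lemma cube_compact : compact (cube d : set V).
Proof.
have -> : (cube d : set V) = [set v : V | forall i, `[(0:R), 1]%classic (v ord0 i)].
  apply/funext => v; apply/propext; split => H i; move: (H i) => /=; by rewrite in_itv.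
exact: (@rV_compact R d (fun=> `[(0:R), 1]%classic) (fun=> @segment_compact _ 0 1)).
Qed.

Lemma cube0 : cube d (0 : V).
Proof. by move=> i; rewrite mxE lexx ler01. Qed.

Lemma cube_convex {x y : V} {t : R} : cube d x -> cube d y -> 0 <= t <= 1 ->
  cube d (t *: x + (1 - t) *: y).
Proof.
move=> cx cy /andP[t0 t1] i; rewrite !mxE.
have /andP[x0 x1] := cx i; have /andP[y0 y1] := cy i.
apply/andP; split; first by nra.
nra.
Qed.

Lemma cube_scale {x : V} {t : R} : cube d x -> 0 <= t <= 1 -> cube d (t *: x).
Proof.
move=> cx t01; have := cube_convex cx cube0 t01.
by rewrite scaler0 addr0.
Qed.

Lemma grad_entry (f : V -> R) x i : grad f x ord0 i = 'D_(delta_mx ord0 i) f x.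
Proof. by rewrite mxE. Qed.

Lemma diff_decomp (f : V -> R) p w : differentiable f p ->
  'd f p w = \sum_(i < d) w ord0 i * 'D_(delta_mx ord0 i) f p.
Proof.
move=> df; rewrite [w in LHS]row_sum_delta linear_sum; apply: eq_bigr => i _.
by rewrite linearZ deriveE.
Qed.

Lemma grad_comp (f : V -> R) (k : R -> R) x :
  differentiable f x -> derivable k (f x) 1 ->
  differentiable (k \o f) x /\ grad (k \o f) x = derive1 k (f x) *: grad f x.
Proof.
move=> df dk; have dk' := dk; move/derivable1_diffP in dk'.
have dkf : differentiable (k \o f) x by apply: differentiable_comp.
split => //; apply/rowP => i; rewrite !mxE deriveE // diff_comp //= deriv1E //.
by rewrite deriveE // mulrC.
Qed.
Lemma cube_mvt (f : V -> R) c :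
  (forall p, cube d p -> differentiable f p) ->
  (forall p i, cube d p -> `|'D_(delta_mx ord0 i) f p| <= c) ->
  forall x, cube d x -> `|f x - f 0| <= d%:R * c.
Proof.
move=> df dc x cx.
pose h := fun t : R => f (t *: x).
have dh : forall t : R, 0 <= t <= 1 -> differentiable h t /\ 'd h t 1 = 'd f (t *: x) x.
  move=> t t01; have dft := df _ (cube_scale cx t01).
  have dg : differentiable (fun s : R => s *: x) t.
    exact: (ex_diff (is_diff_def := is_diff_scalel t x)).
  have -> : h = f \o (fun s : R => s *: x) by [].
  split; first exact: differentiable_comp.
  by rewrite diff_comp // /= (diff_val (is_diff_def := is_diff_scalel t x)) scale1r.
have [c0 c01 E] : exists2 c0, c0 \in `[(0:R), 1] & h 1 - h 0 = 'd f (c0 *: x) x * (1 - 0).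
  apply: MVT_segment; first exact: ler01.
    move=> t; rewrite in_itv /= => /andP[t0 t1].
    have t01 : 0 <= t <= 1 by rewrite !ltW.
    have [dht dh1] := dh t t01.
    rewrite -dh1 -deriveE //; apply: derivableP.
    by apply/derivable1_diffP.
  apply: continuous_in_subspaceT => t; rewrite inE /= in_itv /= => t01.
  by apply: differentiable_continuous; case: (dh t t01).
move: E; rewrite /h scale1r scale0r subr0 mulr1 => ->.
rewrite in_itv /= in c01.
rewrite diff_decomp; last exact: df (cube_scale cx c01).
rewrite (le_trans (ler_norm_sum _ _ _)) //.
have -> : d%:R * c = \sum_(i < d) c by rewrite sumr_const card_ord mulr_natl.
apply: ler_sum => i _; rewrite normrM.
have /andP[xi0 xi1] := cx i.
have := dc _ i (cube_scale cx c01).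
rewrite ger0_norm //.
move=> H; apply: le_trans H; rewrite ler_piMl //.
Qed.
Lemma enorm_coord (v : V) i : `|v ord0 i| <= enorm v.
Proof.
rewrite /enorm -sqrtr_sqr ler_wsqrtr //.
rewrite (bigD1 i) //= lerDl sumr_ge0 // => j _; exact: sqr_ge0.
Qed.

Lemma enorm_le_sum (v : V) : enorm v <= \sum_(i < d) `|v ord0 i|.
Proof.
have H : \sum_(i < d) v ord0 i ^+ 2 <= (\sum_(i < d) `|v ord0 i|) ^+ 2
   /\ 0 <= \sum_(i < d) `|v ord0 i|.
  apply: (big_ind2 (fun s t : R => s <= t ^+ 2 /\ 0 <= t)).
  - by rewrite expr0n /= lexx.
  - move=> y1 y2 z1 z2 [h1 h2] [h3 h4]; split; last exact: addr_ge0.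
    nra.
  - by move=> i _; rewrite real_normK ?num_real // lexx normr_ge0.
case: H => H1 H2.
by rewrite /enorm -(ger0_norm H2) -sqrtr_sqr ler_wsqrtr.
Qed.

Lemma grad_addc (G : V -> R) beta x : differentiable G x ->
  differentiable (fun y => G y + beta) x /\ grad (fun y => G y + beta) x = grad G x.
Proof.
move=> dG.
have -> : (fun y => G y + beta) = G + cst beta by apply/funext.
split; first by apply: differentiableD => //; exact: differentiable_cst.
apply/rowP => i; rewrite !mxE deriveD ?derive_cst ?addr0 //.
exact: diff_derivable.
Qed.

Lemma part2 (g : R -> R) (G : V -> R) beta : Gamma_fun g -> convex_on setT G ->
  C1_near_cube G ->
  exists Phi : V -> R, C1_near_cube Phi /\ convex_on (cube d) Phi /\
    forall x, cube d x -> grad Phi x = g (G x + beta) *: grad G x.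
Proof.
move=> [cg [ng pg]] cG [U [cU [oU [dU cgU]]]].
have cGc : {within cube d, continuous G}.
  apply: continuous_in_subspaceT => x; rewrite inE => cx.
  exact/differentiable_continuous/dU/cU.
have [cm cmin Hcm] := @EVT_min_rV R d G (cube d) (ex_intro _ 0 cube0) cube_compact cGc.
rewrite inE in cmin.
set a0 := G cm + beta - 1.
have [Gm HGm] := @antideriv R g a0 cg.
have [monoG convG] : (forall u w, a0 < u -> u <= w -> Gm u <= Gm w) /\
  (forall u w t, a0 < u -> a0 < w -> 0 <= t <= 1 ->
     Gm (t * u + (1 - t) * w) <= t * Gm u + (1 - t) * Gm w).
  apply: deriv_convex.
  - by move=> y /HGm [].
  - by move=> y z ay yz; rewrite (HGm _ ay).2 (HGm _ (lt_le_trans ay yz)).2 ng.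
  - by move=> y /HGm [_ ->].
have acube : forall x, cube d x -> a0 < G x + beta.
  move=> x cx; have : G cm <= G x by apply: Hcm; rewrite inE.
  rewrite /a0; lra.
pose U' := U `&` [set x | a0 < G x + beta].
pose Phi := fun x => Gm (G x + beta).
have HPhi : forall x, U' x -> differentiable Phi x /\
    grad Phi x = g (G x + beta) *: grad G x.
  move=> x [Ux ax].
  have [dGb gGb] := grad_addc G beta x (dU _ Ux).
  have [dP gP] := grad_comp (fun y => G y + beta) Gm x dGb (HGm _ ax).1.
  by split => //; rewrite /Phi; rewrite -/(Gm \o (fun y => G y + beta)) gP gGb (HGm _ ax).2.
have U'nbhs : forall x, U' x -> nbhs x U'.
  move=> x [Ux ax]; apply: filterI.
    by move: oU; rewrite openE => /(_ x Ux).
  have cx : {for x, continuous G} by exact/differentiable_continuous/dU.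
  have : \forall t \near x, `|G x - G t| < G x + beta - a0.
    by apply: (@cvgr_dist_lt _ _ _ (nbhs x)); [exact: cx | rewrite subr_gt0].
  apply: filterS => t /=; rewrite ltrBrDl => h.
  have := ler_norm (G x - G t); lra.
exists Phi; split; last split.
- exists U'; split; first by move=> x cx; split; [exact: cU | exact: acube].
  split; first by rewrite openE => x /U'nbhs.
  split; first by move=> x /HPhi [].
  move=> x U'x.
  have hc : {for x, continuous (fun y => g (G y + beta) *: grad G y)}.
    apply: continuousZ; last exact: cgU (U'x.1).
    apply: (@continuous_comp _ _ _ (fun y => G y + beta) g).
      apply: (@continuousD _ _ _ G (cst beta)); first exact/differentiable_continuous/dU/(U'x.1).
      exact: cst_continuous.
    exact: cg.
  rewrite /prop_for /continuous_at (HPhi _ U'x).2.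
  have E : \forall y \near x, g (G y + beta) *: grad G y = grad Phi y.
    by apply: filterS (U'nbhs _ U'x) => y /HPhi [_ ->].
  exact: cvg_trans (near_eq_cvg E) hc.
- move=> x y cx cy t t01.
  have cz := cube_convex cx cy t01.
  rewrite /Phi.
  apply: (@le_trans _ _ (Gm (t * (G x + beta) + (1 - t) * (G y + beta)))).
    apply: monoG; first exact: acube.
    have := cG x y I I t t01; lra.
  by apply: convG => //; apply: acube.
- by move=> x cx; exact: (HPhi x (conj (cU _ cx) (acube _ cx))).2.
Qed.

Lemma dotv_diff (c : V) x : differentiable (dotv c) x.
Proof.
have -> : dotv c = \sum_(j < d) (c ord0 j *: (fun y : V => y ord0 j)).
  by rewrite fct_sumE; apply/funext => y; rewrite /dotv; apply: eq_bigr.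
apply: differentiable_sum => j; apply: differentiableZ.
exact: differentiable_coord.
Qed.

Lemma ridge_diff N (psi : 'I_N -> R -> R) (a : 'I_N -> V) (b : 'I_N -> R) x :
  (forall i, C1_real (psi i)) -> differentiable (ridge_sum psi a b) x.
Proof.
move=> Hp.
have -> : ridge_sum psi a b = \sum_(i < N) (fun y => psi i (dotv (a i) y + b i)).
  by rewrite fct_sumE; apply/funext => y.
apply: differentiable_sum => i.
apply: (@differentiable_comp _ _ _ _ (fun y => dotv (a i) y + b i) (psi i)).
  apply: (@differentiableD _ _ _ (dotv (a i)) (cst (b i))); first exact: dotv_diff.
  exact: differentiable_cst.
by apply/derivable1_diffP; exact: (Hp i).1.
Qed.

Lemma grad_bound (G : V -> R) : C1_near_cube G ->
  exists B, 0 <= B /\ forall x i, cube d x -> `|grad G x ord0 i| <= B.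
Proof.
move=> [U [cU [_ [_ cgU]]]].
have : forall i : 'I_d, exists Bi : R, 0 <= Bi /\
    forall x, cube d x -> `|grad G x ord0 i| <= Bi.
  move=> i.
  have cont : {within cube d, continuous (fun x => `|grad G x ord0 i|)}.
    apply: continuous_in_subspaceT => x; rewrite inE => cx.
    apply: (@continuous_comp _ _ _ (fun x => grad G x ord0 i) Num.norm).
      apply: (@continuous_comp _ _ _ (grad G) (fun M : V => M ord0 i)).
        exact: cgU (cU _ cx).
      exact: coord_continuous.
    exact: norm_continuous.
  have [c _ Hc] := @EVT_max_rV R d _ (cube d) (ex_intro _ 0 cube0) cube_compact cont.
  exists `|grad G c ord0 i|; split => // x cx; apply: Hc; by rewrite inE.
move=> /fin_all_exists [Bf HB].
exists (\sum_(i < d) Bf i); split; first by apply: sumr_ge0 => i _; case: (HB i).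
move=> x i cx; apply: (le_trans ((HB i).2 x cx)).
rewrite (bigD1 i) //= lerDl; apply: sumr_ge0 => j _; by case: (HB j).
Qed.

Lemma coord_diff_le (u w : V) i : `|u ord0 i - w ord0 i| <= enorm (u - w).
Proof. by have := enorm_coord (u - w) i; rewrite !mxE. Qed.

Lemma part1 (Gamma : set (R -> R)) (GG : set (V -> R))
  (HGamma : forall g, Gamma g -> Gamma_fun g)
  (HGamma_dense : forall (K : set R) (h : R -> R) (eta : R),
     compact K -> {within K, continuous h} ->
     (forall x y, K x -> K y -> x <= y -> h x <= h y) ->
     (forall x, K x -> 0 <= h x) -> 0 < eta ->
     exists2 g, Gamma g & sup_lt K (fun x => `|h x - g x|) eta)
  (HGG : forall G, GG G -> convex_on setT G /\ C1_near_cube G)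
  (HGG_dense : forall (N : nat) (psi : 'I_N -> R -> R) (a : 'I_N -> 'rV[R]_d)
     (b : 'I_N -> R) (eta : R),
     (forall i, C1_real (psi i) /\ convex_fun1 (psi i)) -> 0 < eta ->
     exists2 G, GG G &
       sup_lt (cube d) (fun x => enorm (grad (ridge_sum psi a b) x - grad G x)) eta)
  (N : nat) (psi : 'I_N -> R -> R) (a : 'I_N -> 'rV[R]_d) (b : 'I_N -> R)
  (T : R -> R)
  (HT : C1_real T /\ convex_fun1 T /\ nondecr T)
  (Hpsi : forall i, C1_real (psi i) /\ convex_fun1 (psi i)) (eps : R) :
  0 < eps ->
  exists g, exists G, exists beta : R, Gamma g /\ GG G /\
       sup_lt (cube d)
         (fun x => enorm (grad (fun x => T (ridge_sum psi a b x)) x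
                          - g (G x + beta) *: grad G x)) eps.
Proof.
move=> eps0.
set Rf := ridge_sum psi a b.
have dRf : forall x, differentiable Rf x.
  by move=> x; apply: ridge_diff => i; case: (Hpsi i).
have cRf : {within cube d, continuous Rf}.
  apply: continuous_in_subspaceT => x _; exact: differentiable_continuous.
have [xm _ Hm] := @EVT_min_rV R d Rf (cube d) (ex_intro _ 0 cube0) cube_compact cRf.
have [xM _ HM] := @EVT_max_rV R d Rf (cube d) (ex_intro _ 0 cube0) cube_compact cRf.
set m := Rf xm; set M := Rf xM.
have Rin : forall x, cube d x -> m <= Rf x <= M.
  by move=> x cx; rewrite Hm ?HM ?inE.
have [G1 GG1 [c1 [c1lt Hc1]]] := HGG_dense N psi a b 1 Hpsi ltr01.
have [B1 [B10 HB1]] := grad_bound G1 (HGG G1 GG1).2.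
set B := 1 + B1.
have B0 : 0 <= B by rewrite addr_ge0.
have HB : forall x i, cube d x -> `|grad Rf x ord0 i| <= B.
  move=> x i cx.
  have h1 := coord_diff_le (grad Rf x) (grad G1 x) i.
  have h2 := Hc1 x cx; have h3 := HB1 x i cx.
  have h4 : `|grad Rf x ord0 i| <= `|grad Rf x ord0 i - grad G1 x ord0 i| + `|grad G1 x ord0 i|.
    by rewrite -[X in `|X| <= _](subrK (grad G1 x ord0 i)) ler_normD.
  rewrite /B; lra.
case: HT => [[dT cTp] [cvT nT]].
set Tp := derive1 T.
have mTp : forall y z, y <= z -> Tp y <= Tp z.
  by move=> y z; apply: convex_deriv_mono.
have pTp : forall y, 0 <= Tp y by move=> y; apply: nondecr_deriv_ge0.
set K := `[m - 1, M + 1]%classic.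
have cK : compact K by exact: segment_compact.
set e0 := eps / ((d%:R + 1) * (2 * B + 1)).
have dp : (0:R) < d%:R + 1 by rewrite natr1 ltr0n.
have d0 : (0:R) <= d%:R by rewrite ler0n.
have e00 : 0 < e0 by rewrite /e0 divr_gt0 // mulr_gt0 //; lra.
have [del0 del0p Hdel] := unif_cont Tp K e0 cK cTp e00.
have [g Gg [cg [cglt Hcg]]] := HGamma_dense K Tp e0 cK
  (continuous_subspaceT (fun x => cTp x))
  (fun x y _ _ xy => mTp x y xy) (fun x _ => pTp x) e00.
have [contg [ng pg]] := HGamma g Gg.
set gm := g (M + 1).
have gm0 : 0 <= gm by exact: pg.
set del1 := Num.min del0 1.
have del1p : 0 < del1 by rewrite /del1 lt_min del0p ltr01.
set eta := Num.min (del1 / (d%:R + 1)) (e0 / (gm + 1)).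
have etap : 0 < eta by rewrite /eta lt_min; apply/andP; split; apply: divr_gt0 => //; lra.
have [G GGG [c2 [c2lt Hc2]]] := HGG_dense N psi a b eta Hpsi etap.
have [cvG [U [cU [oU [dU cgU]]]]] := HGG G GGG.
exists g, G, (Rf 0 - G 0); split; first exact: Gg.
split; first exact: GGG.
have Hclose : forall x, cube d x -> `|G x + (Rf 0 - G 0) - Rf x| <= d%:R * eta.
  move=> x cx.
  have hd : forall p, cube d p -> differentiable (G - Rf) p.
    by move=> p cp; apply: differentiableB; [exact: dU (cU _ cp) | exact: dRf].
  have hb : forall p i, cube d p -> `|'D_(delta_mx ord0 i) (G - Rf) p| <= eta.
    move=> p i cp.
    rewrite deriveB; [|exact: diff_derivable (dU _ (cU _ cp))|exact: diff_derivable].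
    rewrite -!grad_entry distrC.
    apply: le_trans (coord_diff_le _ _ i) _.
    apply: le_trans (Hc2 p cp) _; exact: ltW.
  have := cube_mvt (G - Rf) eta hd hb x cx.
  have -> : G x + (Rf 0 - G 0) - Rf x = G x - Rf x - (G 0 - Rf 0) by ring.
  exact.
set beta := Rf 0 - G 0.
have dlt : d%:R * eta < del1.
  have h : eta <= del1 / (d%:R + 1) by rewrite /eta ge_min lexx.
  have h2 : d%:R * eta <= d%:R * (del1 / (d%:R + 1)) by apply: ler_wpM2l.
  apply: le_lt_trans h2 _.
  rewrite mulrA ltr_pdivrMr //; nra.
have del1a : del1 <= del0 by rewrite /del1 ge_min lexx.
have del1b : del1 <= 1 by rewrite /del1 ge_min lexx orbT.
have gmeta : gm * eta <= e0.
  have h : eta <= e0 / (gm + 1) by rewrite /eta ge_min lexx orbT.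
  apply: (@le_trans _ _ (gm * (e0 / (gm + 1)))); first exact: ler_wpM2l.
  rewrite mulrA ler_pdivrMr; last lra.
  nra.
have c2eta : c2 <= eta by exact: ltW.
exists (d%:R * (e0 * (2 * B + 1))); split.
  have -> : d%:R * (e0 * (2 * B + 1)) = eps * (d%:R / (d%:R + 1)).
    rewrite /e0; field; apply/andP; split; apply: lt0r_neq0 => //; lra.
  rewrite gtr_pMr // ltr_pdivrMr // mul1r; lra.
move=> x cx.
have /andP[rm rM] := Rin x cx.
have cl := Hclose x cx.
set w := G x + beta; set r := Rf x.
rewrite -/w -/r in cl rm rM.
have Kr : K r by rewrite /K /= in_itv /=; apply/andP; split; lra.
have Kw : K w.
  rewrite /K /= in_itv /=; have := ler_norm (w - r); have := ler_normr (w - r).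
  move=> h1 h2. move: cl; rewrite ler_norml => /andP[cl1 cl2].
  apply/andP; split; lra.
have wr : `|r - w| < del0.
  by rewrite distrC; apply: le_lt_trans cl _; apply: lt_le_trans dlt _.
have h1 := Hdel r w Kr wr.
have h2 := Hcg w Kw.
have gw0 : 0 <= g w := pg w.
have gwm : g w <= gm.
  apply: ng; move: Kw; rewrite /K /= in_itv /= => /andP[_ ->] //.
have gradF : grad (fun y => T (Rf y)) x = Tp r *: grad Rf x.
  exact: (grad_comp Rf T x (dRf x) (dT r)).2.
rewrite gradF.
apply: le_trans (enorm_le_sum _) _.
have -> : d%:R * (e0 * (2 * B + 1)) = \sum_(i < d) (e0 * (2 * B + 1)).
  by rewrite sumr_const card_ord mulr_natl.
apply: ler_sum => i _.
have hR := HB x i cx.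
have hRG : `|grad Rf x ord0 i - grad G x ord0 i| <= eta.
  apply: le_trans (coord_diff_le _ _ i) _; apply: le_trans (Hc2 x cx) _; exact: c2eta.
have -> : (Tp r *: grad Rf x - g w *: grad G x) ord0 i =
  Tp r * grad Rf x ord0 i - g w * grad G x ord0 i by rewrite !mxE.
set dR := grad Rf x ord0 i; set dG := grad G x ord0 i.
rewrite -/dR -/dG in hR hRG.
have -> : Tp r * dR - g w * dG = (Tp r - g w) * dR + g w * (dR - dG) by ring.
apply: le_trans (ler_normD _ _) _.
rewrite !normrM (ger0_norm gw0).
have hX : `|Tp r - g w| <= 2 * e0.
  have : `|Tp r - g w| <= `|Tp r - Tp w| + `|Tp w - g w|.
    by rewrite -[X in `|X| <= _](subrKA (Tp w)) ler_normD.
  lra.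
have hX0 := normr_ge0 (Tp r - g w).
have hR0 := normr_ge0 dR.
have hZ0 := normr_ge0 (dR - dG).
have : `|Tp r - g w| * `|dR| <= 2 * e0 * B by apply: ler_pM.
have : g w * `|dR - dG| <= gm * eta by apply: ler_pM.
lra.
Qed.

End S.

Theorem theorem6 (R : realType) (d : nat)
  (Gamma : set (R -> R)) (GG : set ('rV[R]_d -> R))
  (HGamma : forall g, Gamma g -> Gamma_fun g)
  (HGamma_dense : forall (K : set R) (h : R -> R) (eta : R),
     compact K -> {within K, continuous h} ->
     (forall x y, K x -> K y -> x <= y -> h x <= h y) ->
     (forall x, K x -> 0 <= h x) -> 0 < eta ->
     exists2 g, Gamma g & sup_lt K (fun x => `|h x - g x|) eta)
  (HGG : forall G, GG G -> convex_on setT G /\ C1_near_cube G)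
  (HGG_dense : forall (N : nat) (psi : 'I_N -> R -> R) (a : 'I_N -> 'rV[R]_d)
     (b : 'I_N -> R) (eta : R),
     (forall i, C1_real (psi i) /\ convex_fun1 (psi i)) -> 0 < eta ->
     exists2 G, GG G &
       sup_lt (cube d) (fun x => enorm (grad (ridge_sum psi a b) x - grad G x)) eta)
  (N : nat) (psi : 'I_N -> R -> R) (a : 'I_N -> 'rV[R]_d) (b : 'I_N -> R)
  (T : R -> R)
  (HT : C1_real T /\ convex_fun1 T /\ nondecr T)
  (Hpsi : forall i, C1_real (psi i) /\ convex_fun1 (psi i)) :
  let F := fun x => T (ridge_sum psi a b x) in
  (forall eps : R, 0 < eps ->
     exists g, exists G, exists beta : R, Gamma g /\ GG G /\
       sup_lt (cube d)
         (fun x => enorm (grad F x - g (G x + beta) *: grad G x)) eps)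
  /\
  (forall g G (beta : R), Gamma g -> GG G ->
     exists Phi : 'rV[R]_d -> R,
       C1_near_cube Phi /\ convex_on (cube d) Phi /\
       forall x, cube d x -> grad Phi x = g (G x + beta) *: grad G x).
Proof.
move=> F; rewrite /F; split.
- move=> eps e0.
  exact: (@part1 R d Gamma GG HGamma HGamma_dense HGG HGG_dense N psi a b T HT Hpsi eps e0).
- move=> g G beta Gg GGG.
  exact: (part2 g G beta (HGamma g Gg) (HGG G GGG).1 (HGG G GGG).2).
Qed.
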